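(* Let $\mathcal{E}$ be a finite-dimensional real inner product space, $\mathcal{K}\subseteq\mathcal{E}$ a closed convex cone, $A:\mathbb{R}^m\to\mathcal{E}$ linear with adjoint $A^*$, $c\in\mathcal{E}$, $b\in\mathbb{R}^m$. Consider (P): maximize $\langle b,y\rangle$ s.t. $c-Ay\in\mathcal{K}$; (D): minimize $\langle c,x\rangle$ s.t. $A^*x=b$, $x\in\mathcal{K}^*$. Let $s_0,\dots,s_{N-1}\in\mathcal{E}$ and faces $\mathcal{F}_0=\mathcal{K}$, $\mathcal{F}_{i+1}=\mathcal{F}_i\cap s_i^{\perp}$ satisfy $\langle c,s_i\rangle=0$, $A^*s_i=0$, $s_i\in\mathcal{F}_i^*\setminus\mathcal{F}_i^{\perp}$ for $i=0,\dots,N-1$, and put $\mathcal{F}=\mathcal{F}_N$. Consider (R/P): maximize $\langle b,y\rangle$ s.t. $c-Ay\in\mathcal{F}$; (R/D): minimize $\langle c,x\rangle$ s.t. $A^*x=b$, $x\in\mathcal{F}^*$. The recovery procedure takes an optimal solution $x$ of (R/D) and, for $i=N-1$ down to $0$, finds (if one exists) $\alpha\in\mathbb{R}$ with $x+\alpha s_i\in\mathcal{F}_i^*$ and replaces $x$ by $x+\alpha s_i$; if for some $i$ no such $\alpha$ exists it reports failure, otherwise it outputs the final $x$ and is said to succeed. Then: (1) If $\mathcal{F}_i^*+\operatorname{lin}s_i$ is closed for every $i=0,\dots,N-1$, the procedure succeeds and outputs an optimal solution of (D). (2) Suppose $y$ is an optimal solution of (R/P) and $x$ is an optimal solution of (R/D)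 with $\langle c,x\rangle=\langle b,y\rangle$. If the procedure succeeds on input $x$, then (P) and (D) have optimal solutions with zero duality gap.
   Context: $\mathcal{K}^*=\{z:\langle z,x\rangle\ge0\ \forall x\in\mathcal{K}\}$ is the dual cone; $\mathcal{F}^{\perp}$ is the orthogonal complement of the span of $\mathcal{F}$; $s^{\perp}=\{x:\langle s,x\rangle=0\}$; $\operatorname{lin}s$ is the line spanned by $s$. *)

(* Defs.v *)
(* The finite-dimensional real inner product space E is modelled as
   'cV[R]_n with the standard dot product (every such space is isometric
   to this one); R^m is 'cV[R]_m.  A linear map R^m -> E is a matrix
   A : 'M[R]_(n, m), acting by y |-> A *m y; its adjoint is A^T. *)
From HB Require Import structures.
From mathcomp Require Import all_boot all_order all_algebra.
From mathcomp Require Import all_classical all_reals all_analysis.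
Set Implicit Arguments. Unset Strict Implicit. Unset Printing Implicit Defensive.
Import Order.TTheory GRing.Theory Num.Theory.
Import numFieldNormedType.Exports.
Local Open Scope ring_scope.
Local Open Scope classical_set_scope.

Section Defs.
Variable R : realType.

Definition ip (k : nat) (u v : 'cV[R]_k) : R := \sum_(i < k) u i 0 * v i 0.

Variable n : nat.
Notation E := 'cV[R]_n.

Definition is_cone (K : set E) : Prop :=
  forall x t, K x -> 0 <= t -> K (t *: x).
Definition is_convex (K : set E) : Prop :=
  forall x y t, K x -> K y -> 0 <= t -> t <= 1 -> K (t *: x + (1 - t) *: y).
Definition closed_convex_cone (K : set E) : Prop :=
  [/\ K 0, is_cone K, is_convex K & closed K].

Definition dual (K : set E) : set E := [set z | forall x, K x -> 0 <= ip z x].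
Definition orthc (F : set E) : set E := [set z | forall x, F x -> ip z x = 0].
Definition hperp (s : E) : set E := [set x | ip s x = 0].
Definition lin_of (s : E) : set E := [set a *: s | a in [set: R]].
Definition mink_sum (A B : set E) : set E := [set a + b | a in A & b in B].

Fixpoint faces (K : set E) (s : nat -> E) (i : nat) : set E :=
  match i with
  | 0 => K
  | i'.+1 => faces K s i' `&` hperp (s i')
  end.

Variable m : nat.
Variables (A : 'M[R]_(n, m)) (c : E) (b : 'cV[R]_m).

Definition feasP (C : set E) (y : 'cV[R]_m) : Prop := C (c - A *m y).
Definition optP (C : set E) (y : 'cV[R]_m) : Prop :=
  feasP C y /\ forall y', feasP C y' -> ip b y' <= ip b y.
Definition feasD (C : set E) (x : E) : Prop := A^T *m x = b /\ dual C x.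
Definition optD (C : set E) (x : E) : Prop :=
  feasD C x /\ forall x', feasD C x' -> ip c x <= ip c x'.

(* Recovery procedure (nondeterministic in the choice of alpha).
   [reach K s N x i z] : z is a possible value of the current iterate just
   before step i-1 is performed (i.e. after steps N-1, ..., i), starting
   from input x. *)
Inductive reach (K : set E) (s : nat -> E) (N : nat) (x : E) : nat -> E -> Prop :=
  | reach_start : reach K s N x N x
  | reach_step : forall i z (a : R), (i < N)%N -> reach K s N x i.+1 z ->
      dual (faces K s i) (z + a *: s i) -> reach K s N x i (z + a *: s i).

(* the procedure succeeds: no run ever reports failure *)
Definition rec_succeeds (K : set E) (s : nat -> E) (N : nat) (x : E) : Prop :=
  forall i z, (i < N)%N -> reach K s N x i.+1 z ->
    exists a : R, dual (faces K s i) (z + a *: s i).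

Definition rec_output (K : set E) (s : nat -> E) (N : nat) (x x' : E) : Prop :=
  reach K s N x 0 x'.

End Defs.

(* Main.v *)
Require Import Defs.
From HB Require Import structures.
From mathcomp Require Import all_boot all_order all_algebra.
From mathcomp Require Import all_classical all_reals all_analysis.
From mathcomp Require Import ring lra.
Import Order.TTheory GRing.Theory Num.Theory.
Import numFieldNormedType.Exports.
Local Open Scope ring_scope.
Local Open Scope classical_set_scope.
Section Aux.
Variable R : realType.

Lemma ipE k (u v : 'cV[R]_k) : ip u v = (u^T *m v) 0 0.
Proof. by rewrite /ip mxE; apply: eq_bigr => i _; rewrite mxE. Qed.

Lemma ipC k (u v : 'cV[R]_k) : ip u v = ip v u.
Proof. by apply: eq_bigr => i _; rewrite mulrC. Qed.

Lemma ipDl k (u v w : 'cV[R]_k) : ip (u + v) w = ip u w + ip v w.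
Proof. by rewrite /ip -big_split; apply: eq_bigr => i _; rewrite mxE mulrDl. Qed.

Lemma ipZl k a (u w : 'cV[R]_k) : ip (a *: u) w = a * ip u w.
Proof. by rewrite /ip mulr_sumr; apply: eq_bigr => i _; rewrite mxE mulrA. Qed.

Lemma ipNl k (u w : 'cV[R]_k) : ip (- u) w = - ip u w.
Proof. by rewrite -scaleN1r ipZl mulN1r. Qed.

Lemma ipBl k (u v w : 'cV[R]_k) : ip (u - v) w = ip u w - ip v w.
Proof. by rewrite ipDl ipNl. Qed.

Lemma ipDr k (u v w : 'cV[R]_k) : ip w (u + v) = ip w u + ip w v.
Proof. by rewrite ipC ipDl !(ipC _ w). Qed.

Lemma ipZr k a (u w : 'cV[R]_k) : ip w (a *: u) = a * ip w u.
Proof. by rewrite ipC ipZl ipC. Qed.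

Lemma ipBr k (u v w : 'cV[R]_k) : ip w (u - v) = ip w u - ip w v.
Proof. by rewrite ipC ipBl !(ipC _ w). Qed.

Lemma ip0l k (w : 'cV[R]_k) : ip 0 w = 0.
Proof. by rewrite /ip big1 // => i _; rewrite mxE mul0r. Qed.

Lemma ip0r k (w : 'cV[R]_k) : ip w 0 = 0.
Proof. by rewrite ipC ip0l. Qed.

Lemma ip_ge0 k (u : 'cV[R]_k) : 0 <= ip u u.
Proof. by apply: sumr_ge0 => i _; rewrite -expr2 sqr_ge0. Qed.

Lemma ip_eq0 k (u : 'cV[R]_k) : ip u u = 0 -> u = 0.
Proof.
move=> /psumr_eq0P H.
apply/matrixP => i j; rewrite ord1 mxE.
have /eqP : u i 0 * u i 0 = 0 by apply: H => // l _; rewrite -expr2 sqr_ge0.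
by rewrite mulf_eq0 orbb => /eqP.
Qed.

Lemma ip_adj n m (A : 'M[R]_(n, m)) (x : 'cV[R]_n) (y : 'cV[R]_m) :
  ip (A^T *m x) y = ip x (A *m y).
Proof. by rewrite !ipE trmx_mul trmxK mulmxA. Qed.

Lemma trmx_cont n : continuous (fun v : 'rV[R]_n => (v^T : 'cV[R]_n)).
Proof.
move=> /= M s /= /nbhs_ballP [e e0 es].
apply/nbhs_ballP; exists e => //= N [_ MN]; apply: es; split => // i j.
by rewrite !mxE; exact: MN.
Qed.

Lemma ip_cont n (u : 'cV[R]_n) : continuous (fun x : 'cV[R]_n => ip u x).
Proof.
rewrite /ip; apply: continuous_big => [|i _]; first exact: add_continuous.
move=> x; apply: continuousM; first exact: cst_continuous.
exact: coord_continuous.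
Qed.

Lemma hperp_closed n (u : 'cV[R]_n) : closed (hperp u).
Proof.
rewrite /hperp.
have -> : [set x | ip u x = 0] = (fun x => ip u x) @^-1` [set y | y = 0] by [].
apply: preimage_closed; last exact: closed_eq.
by move=> x _; exact: ip_cont.
Qed.

Lemma sq_cont n : continuous (fun x : 'cV[R]_n => ip x x).
Proof.
rewrite /ip; apply: continuous_big => [|i _]; first exact: add_continuous.
move=> x; apply: continuousM; exact: coord_continuous.
Qed.

Lemma proj_exists n (C : set 'cV[R]_n) (z : 'cV[R]_n) : C 0 -> closed C ->
  exists2 p, C p & forall w, C w -> ip (z - p) (z - p) <= ip (z - w) (z - w).
Proof.
move=> C0 Ccl.
pose Z := ip z z.
pose g := fun v : 'rV[R]_n => ip (z - v^T) (z - v^T).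
have gc : continuous g.
  move=> v; apply: (@continuous_comp _ _ _ (fun v : 'rV[R]_n => z - v^T)
      (fun x : 'cV[R]_n => ip x x)); last exact: sq_cont.
  apply: (@continuousB _ _ _ (fun=> z) (fun v : 'rV[R]_n => v^T)).
    exact: cst_continuous.
  exact: trmx_cont.
pose S := [set v : 'rV[R]_n | C v^T /\ g v <= Z].
have Scl : closed S.
{  have -> : S = (fun v : 'rV[R]_n => v^T) @^-1` C `&` g @^-1` [set y | y <= Z] by [].
  apply: closedI; apply: preimage_closed => //.
  all: try (move=> x _; first [exact: trmx_cont | exact: gc]).
  all: try exact: closed_le. }
pose M := fun i : 'I_n => `|z i 0| + 1 + Z.
have Bc : compact [set v : 'rV[R]_n | forall i, `[- M i, M i]%classic (v ord0 i)].
  apply: (@rV_compact _ _ (fun i => `[- M i, M i]%classic)) => i.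
  exact: segment_compact.
have SB : S `<=` [set v : 'rV[R]_n | forall i, `[- M i, M i]%classic (v ord0 i)].
  move=> v [_ gv] i /=; rewrite in_itv /=.
  have hi : (z i 0 - v ord0 i) * (z i 0 - v ord0 i) <= Z.
    apply: le_trans gv; rewrite /g /ip (bigD1 i) //= !mxE lerDl.
    by apply: sumr_ge0 => j _; rewrite -expr2 sqr_ge0.
  have Z0 : 0 <= Z by exact: ip_ge0.
  have h1 := ler_norm (z i 0). have h2 : - `|z i 0| <= z i 0 by rewrite lerNl -normrN ler_norm.
  rewrite /M; apply/andP; split; nra.
have Sc : compact S by apply: subclosed_compact Scl Bc SB.
have S0 : S !=set0.
  exists 0; split; first by rewrite trmx0.
  by rewrite /g trmx0 subr0.
have [c cS cmin] := EVT_min_rV S0 Sc (continuous_subspaceT gc).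
have [Cc gcZ] : S c by rewrite inE in cS.
exists c^T => // w Cw.
have gw : g w^T = ip (z - w) (z - w) by rewrite /g trmxK.
case: (leP (ip (z - w) (z - w)) Z) => hw.
  by rewrite -gw; apply: cmin; rewrite inE; split; rewrite ?trmxK ?gw.
exact: le_trans gcZ (ltW hw).
Qed.

Lemma ipNr k (u w : 'cV[R]_k) : ip w (- u) = - ip w u.
Proof. by rewrite ipC ipNl ipC. Qed.

Lemma ip_expand k (u v : 'cV[R]_k) t :
  ip (u + t *: v) (u + t *: v) = ip u u + t * ip u v + (t * ip u v + t * (t * ip v v)).
Proof. by rewrite ipDl !ipDr !ipZl !ipZr (ipC _ v u). Qed.

Lemma bipolar n (C : set 'cV[R]_n) : closed_convex_cone C -> dual (dual C) `<=` C.
Proof.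
case=> C0 Ccone Cconv Ccl z zdd; apply: contrapT => Cz.
have [p Cp pmin] := @proj_exists n C z C0 Ccl.
pose h := p - z.
have var : forall w, C w -> 0 <= ip h (w - p).
  move=> w Cw; rewrite leNgt; apply/negP => neg.
  pose a := ip h (w - p); pose d := ip (w - p) (w - p).
  have d0 : 0 <= d by exact: ip_ge0.
  have da : 0 < d - a by rewrite /a; lra.
  pose t := (- a) / (d - a).
  have E : t * (d - a) = - a by rewrite /t divfK // gt_eqF.
  have t0 : 0 < t by rewrite /t divr_gt0 // /a; lra.
  have t1 : t <= 1 by rewrite /t ler_pdivrMr // mul1r /a; lra.
  have := pmin (t *: w + (1 - t) *: p) (Cconv _ _ _ Cw Cp (ltW t0) t1).
  have -> : z - (t *: w + (1 - t) *: p) = - (h + t *: (w - p)).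
    by apply/matrixP => i j; rewrite !mxE /h; ring.
  have -> : z - p = - h by rewrite /h opprB.
  rewrite !ipNl !ipNr !opprK ip_expand -/a -/d.
  move=> ineq.
  have E2 : t * (t * d) = t * (t * a - a) by congr (_ * _); lra.
  have ta : t * a < 0 by rewrite pmulr_rlt0.
  have tta : t * (t * a) < 0 by rewrite pmulr_rlt0.
  have E3 : t * (t * a - a) = t * (t * a) - t * a by rewrite mulrBr.
  lra.
have hp : ip h p = 0.
  have h1 := var 0 C0; have h2 := var (2 *: p) (Ccone _ 2 Cp (ler0n _ 2)).
  rewrite sub0r ipNr in h1.
  have : 2 *: p - p = p by rewrite scalerDl scale1r addrK.
  move=> e; rewrite e in h2; lra.
have hd : dual C h.
  move=> w Cw; have := var w Cw; rewrite ipBr hp; lra.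
have := zdd h hd.
have -> : z = p - h by rewrite /h opprB addrC subrK.
rewrite ipBl (ipC _ p) hp sub0r oppr_ge0 => hh.
have hh0 : ip h h = 0 by apply/eqP; rewrite eq_le hh ip_ge0.
have := @ip_eq0 n h hh0; rewrite /h => /eqP; rewrite subr_eq0 => /eqP pz.
by apply: Cz; rewrite -pz.
Qed.

Arguments bipolar {n C}.

Lemma dual_anti n (X Y : set 'cV[R]_n) : X `<=` Y -> dual Y `<=` dual X.
Proof. by move=> XY z zY x Xx; apply: zY; exact: XY. Qed.

Lemma faces_subK n K (s : nat -> 'cV[R]_n) j : faces K s j `<=` K.
Proof. by elim: j => [|j IH] //= x [/IH]. Qed.

Arguments dual_anti {n X Y}.
Arguments faces_subK {n} K s j.

Lemma faces_ccc n K (s : nat -> 'cV[R]_n) j :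
  closed_convex_cone K -> closed_convex_cone (faces K s j).
Proof.
move=> HK; elim: j => [|j [F0 Fc Fv Fcl]] //=; split.
- by split => //; rewrite /hperp /= ip0r.
- by move=> x t [Fx hx] t0; split; [exact: Fc | rewrite /hperp /= ipZr hx mulr0].
- move=> x y t [Fx hx] [Fy hy] t0 t1; split; first exact: Fv.
  by rewrite /hperp /= ipDr !ipZr hx hy !mulr0 addr0.
- by apply: closedI => //; exact: hperp_closed.
Qed.

Lemma key n (F : set 'cV[R]_n) (s z : 'cV[R]_n) :
  closed_convex_cone F ->
  closed (mink_sum (dual F) (lin_of s)) ->
  dual (F `&` hperp s) z -> exists a : R, dual F (z + a *: s).
Proof.
move=> HF Ccl zd.
pose C := mink_sum (dual F) (lin_of s).
have d0 : dual F 0 by move=> x _; rewrite ip0l.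
have Cc : closed_convex_cone C.
  split => //.
  - by exists 0 => //; exists 0; [exists 0 => //; rewrite scale0r|rewrite addr0].
  - move=> x t [u du [_ [a _ <-] <-]] t0.
    exists (t *: u); first by move=> y Fy; rewrite ipZl mulr_ge0 // du.
    exists (t *: (a *: s)); first by exists (t * a) => //; rewrite scalerA.
    by rewrite scalerDr.
  - move=> x y t [u1 du1 [_ [a1 _ <-] <-]] [u2 du2 [_ [a2 _ <-] <-]] t0 t1.
    exists (t *: u1 + (1 - t) *: u2).
      move=> w Fw; rewrite ipDl !ipZl addr_ge0 // mulr_ge0 ?du1 ?du2 //.
      by rewrite subr_ge0.
    exists ((t * a1 + (1 - t) * a2) *: s); first by exists (t * a1 + (1 - t) * a2).
    apply/matrixP => i j; rewrite !mxE; ring.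
have : C z.
  apply: (bipolar Cc z) => h hC.
  have hF : F h.
    apply: (bipolar HF h) => u du; apply: hC.
    by exists u => //; exists 0; [exists 0 => //; rewrite scale0r | rewrite addr0].
  have hs1 : 0 <= ip h s.
    by apply: hC; exists 0 => //; exists s; [exists 1 => //; rewrite scale1r | rewrite add0r].
  have hs2 : 0 <= ip h (- s).
    by apply: hC; exists 0 => //; exists (- s); [exists (-1) => //; rewrite scaleN1r | rewrite add0r].
  rewrite ipNr in hs2.
  apply: zd; split => //; rewrite /hperp /= ipC; lra.
move=> [u du [_ [a _ <-] <-]]; exists (- a).
by rewrite scaleNr addrK.
Qed.

Arguments key {n F s z}.
Arguments faces_ccc {n K} s j.

Lemma reach_dual n (K : set 'cV[R]_n) s N x j z :
  reach K s N x j z -> dual (faces K s N) x -> dual (faces K s j) z.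
Proof. by move=> r xd; elim: r. Qed.

Arguments reach_dual {n K s N x j z}.

Lemma reach_inv n m (K : set 'cV[R]_n) (A : 'M[R]_(n, m)) c s N x j z :
  (forall i, (i < N)%N -> ip c (s i) = 0) ->
  (forall i, (i < N)%N -> A^T *m s i = 0) ->
  reach K s N x j z -> A^T *m z = A^T *m x /\ ip c z = ip c x.
Proof.
move=> hc hA r; elim: r => [|i z' a iN _ [IH1 IH2] _] //.
split; first by rewrite mulmxDr -scalemxAr hA // scaler0 addr0.
by rewrite ipDr ipZr hc // mulr0 addr0.
Qed.

Arguments reach_inv {n m K A c s N x j z}.

Lemma out_opt n m (K : set 'cV[R]_n) (A : 'M[R]_(n, m)) c b s N x x' :
  (forall i, (i < N)%N -> ip c (s i) = 0) ->
  (forall i, (i < N)%N -> A^T *m s i = 0) ->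
  optD A c b (faces K s N) x -> reach K s N x 0 x' -> optD A c b K x'.
Proof.
move=> hc hA [[xA xd] xopt] r.
have [e1 e2] := reach_inv hc hA r.
have x'd := reach_dual r xd.
split; first by split => //; rewrite e1.
move=> x'' [x''A x''d]; rewrite e2; apply: xopt; split => //.
exact: dual_anti (faces_subK K s N) _ x''d.
Qed.

End Aux.
Arguments out_opt {R n m K A c b s N x x'}.
Arguments reach_dual {R n K s N x j z}.
Arguments reach_inv {R n m K A c s N x j z}.
Arguments key {R n F s z}.
Arguments faces_ccc {R n K} s j.
Arguments faces_subK {R n} K s j.

Theorem lemma8 (R : realType) (n m N : nat) (K : set 'cV[R]_n)
  (A : 'M[R]_(n, m)) (c : 'cV[R]_n) (b : 'cV[R]_m) (s : nat -> 'cV[R]_n) :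
  closed_convex_cone K ->
  (forall i, (i < N)%N -> ip c (s i) = 0) ->
  (forall i, (i < N)%N -> A^T *m s i = 0) ->
  (forall i, (i < N)%N ->
     dual (faces K s i) (s i) /\ ~ orthc (faces K s i) (s i)) ->
  (* (1) *)
  ((forall i, (i < N)%N -> closed (mink_sum (dual (faces K s i)) (lin_of (s i)))) ->
   forall x, optD A c b (faces K s N) x ->
     rec_succeeds K s N x /\
     (forall x', rec_output K s N x x' -> optD A c b K x'))
  /\
  (* (2) *)
  (forall (y : 'cV[R]_m) (x : 'cV[R]_n),
     optP A c b (faces K s N) y -> optD A c b (faces K s N) x ->
     ip c x = ip b y ->
     (exists x', rec_output K s N x x') ->
     exists (y' : 'cV[R]_m) (x' : 'cV[R]_n),
       optP A c b K y' /\ optD A c b K x' /\ ip c x' = ip b y').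
Proof.
move=> HK hc hA hs; split.
  move=> hcl x xo; split.
    move=> i z iN r.
    have [[_ xd] _] := xo.
    have zd := reach_dual r xd.
    exact: key (faces_ccc s i HK) (hcl i iN) zd.
  by move=> x' r; exact: out_opt hc hA xo r.
move=> y x [yf yopt] xo cxy [x' r].
have x'o := out_opt hc hA xo r.
have [_ e2] := reach_inv hc hA r.
have [[x'A x'd] _] := x'o.
exists y, x'; split; last by split => //; rewrite e2.
split; first exact: faces_subK yf.
move=> y'' hy''.
have := x'd _ hy''.
have -> : ip b y'' = ip x' (A *m y'') by rewrite -x'A ip_adj.
rewrite ipBr (@ipC R n x' c) e2 cxy.
lra.
Qed.
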